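(* Let $l_0,\ldots,l_{N-1}$ be lines in the real projective plane in bounded general position, with associated graph $G$. Suppose $v_0,\ldots,v_{m-1}$ are vertices of $G$ connected consecutively by edges $e_0,\ldots,e_{m-1}$ of $G$ lying on distinct lines of the arrangement, and that these form (the boundary of) a convex $m$-polygon $V$. Then $V$ is an alcove.
   Context: Lines in $\mathbb{R}P^2$ are in general position if no three of them pass through a common point, and in bounded position if all their pairwise intersection points lie in the affine plane $\mathbb{R}^2$. For lines in bounded general position, the graph $G$ has as vertices the pairwise intersection points of the lines; two vertices $v_1,v_2$ are joined by an edge if some line of the arrangement contains both and no third vertex lies between them on that line; the edge is the closed segment joining them. An alcove is a subset $V\subset\mathbb{R}^2$ such that (i) $V$ is compact, convex and connected, (ii) its boundary $\partial V$ is a union of edges of $G$ belonging to distinct lines, and (iii) $V$ contains no proper subset $W$ satisfying (i) and (ii). *)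

(* Defs.v *)
From HB Require Import structures.
From mathcomp Require Import all_boot all_order all_algebra.
From mathcomp Require Import all_classical all_reals all_analysis.
Set Implicit Arguments. Unset Strict Implicit. Unset Printing Implicit Defensive.
Import Order.TTheory GRing.Theory Num.Theory.
Import numFieldNormedType.Exports.
Local Open Scope ring_scope.
Local Open Scope classical_set_scope.

Section Arrangements.
Variable R : realType.

Local Notation pt := (R * R)%type.

(* affine line  { (x,y) | a x + b y = c }  encoded by (a, b, c) *)
Definition line := (R * R * R)%type.

Definition on_line (l : line) (p : pt) : Prop :=
  l.1.1 * p.1 + l.1.2 * p.2 = l.2.

(* Lines in RP^2 in bounded general position: all pairwise intersection
   points are affine, i.e. the lines are affine lines (proper equations),
   pairwise non-parallel (hence distinct), and no three are concurrent. *)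
Definition bounded_general_position (N : nat) (L : 'I_N -> line) : Prop :=
  (forall i, (L i).1.1 != 0 \/ (L i).1.2 != 0) /\
  (forall i j, i != j -> (L i).1.1 * (L j).1.2 - (L j).1.1 * (L i).1.2 != 0) /\
  (forall i j k (p : pt), i != j -> j != k -> i != k ->
      ~ (on_line (L i) p /\ on_line (L j) p /\ on_line (L k) p)).

Definition vertex N (L : 'I_N -> line) (p : pt) : Prop :=
  exists i j, i != j /\ on_line (L i) p /\ on_line (L j) p.

Definition comb (t : R) (p q : pt) : pt :=
  ((1 - t) * p.1 + t * q.1, (1 - t) * p.2 + t * q.2).

Definition segment (p q : pt) : set pt :=
  [set x | exists2 t, 0 <= t <= 1 & x = comb t p q].

Definition open_segment (p q : pt) : set pt :=
  [set x | exists2 t, 0 < t < 1 & x = comb t p q].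

Definition is_edge N (L : 'I_N -> line) (i : 'I_N) (p q : pt) : Prop :=
  p <> q /\ vertex L p /\ vertex L q /\ on_line (L i) p /\ on_line (L i) q /\
  (forall r, vertex L r -> ~ open_segment p q r).

Definition convex (A : set pt) : Prop :=
  forall p q t, A p -> A q -> 0 <= t <= 1 -> A (comb t p q).

Definition convex_hull (S : set pt) : set pt :=
  [set x | forall C, convex C -> S `<=` C -> C x].

Definition boundary (A : set pt) : set pt := closure A `\` interior A.

(* conditions (i) and (ii) of the definition of an alcove; (i) also asks for
   nonempty interior *)
Definition alcove_cond N (L : 'I_N -> line) (W : set pt) : Prop :=
  [/\ compact W, convex W, connected W, interior W !=set0 &
      exists s : seq ('I_N * pt * pt),
        [/\ uniq [seq e.1.1 | e <- s],
            (forall e, e \in s -> is_edge L e.1.1 e.1.2 e.2) &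
            boundary W = [set x | exists2 e, e \in s & segment e.1.2 e.2 x]]].

Definition alcove N (L : 'I_N -> line) (V : set pt) : Prop :=
  alcove_cond L V /\
  ~ (exists W, W `<=` V /\ W <> V /\ alcove_cond L W).

End Arrangements.
Notation pt R := (R * R)%type (only parsing).

(* Main.v *)
Require Import Defs.
Set Warnings "-notation-overridden,-ambiguous-paths,-notation-incompatible-prefix".
From mathcomp Require Import all_boot all_order all_algebra.
From mathcomp Require Import all_classical all_reals all_analysis.
From mathcomp Require Import ring lra.
Import numFieldNormedType.Exports.
Import Order.TTheory GRing.Theory Num.Theory.
Local Open Scope ring_scope.
Local Open Scope classical_set_scope.

Section Gen.
Variable R : realType.
Local Notation pt := (R * R)%type.

Lemma nbhs2P (x : pt) (P : set pt) : nbhs x P <->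
  exists2 e : R, 0 < e & forall y : pt, `|x.1 - y.1| < e -> `|x.2 - y.2| < e -> P y.
Proof.
rewrite nbhs_ballP; split => -[e e0 H]; exists e => //.
  by move=> y h1 h2; apply: H; split.
by move=> y [h1 h2]; exact: H.
Qed.

Lemma comb1E t (p q : pt) : (comb t p q).1 = p.1 + t * (q.1 - p.1).
Proof. rewrite /comb /=; ring. Qed.
Lemma comb2E t (p q : pt) : (comb t p q).2 = p.2 + t * (q.2 - p.2).
Proof. rewrite /comb /=; ring. Qed.

Lemma comb0 (p q : pt) : comb 0 p q = p.
Proof. by case: p => a b; rewrite /comb /=; congr pair; ring. Qed.
Lemma comb_1 (p q : pt) : comb 1 p q = q.
Proof. by case: q => a b; rewrite /comb /=; congr pair; ring. Qed.

Lemma comb_dist1 s t (p q : pt) :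
  `|(comb s p q).1 - (comb t p q).1| = `|s - t| * `|q.1 - p.1|.
Proof. rewrite !comb1E -normrM; congr Num.norm; ring. Qed.
Lemma comb_dist2 s t (p q : pt) :
  `|(comb s p q).2 - (comb t p q).2| = `|s - t| * `|q.2 - p.2|.
Proof. rewrite !comb2E -normrM; congr Num.norm; ring. Qed.

Lemma comb_close s t (p q : pt) e : 0 < e ->
  `|s - t| < e / (`|q.1 - p.1| + `|q.2 - p.2| + 1) ->
  `|(comb s p q).1 - (comb t p q).1| < e /\ `|(comb s p q).2 - (comb t p q).2| < e.
Proof.
move=> e0 hst; set K := _ + 1 in hst.
have K0 : 0 < K by rewrite /K; apply: ltr_wpDl => //; apply: addr_ge0.
have hK : `|s - t| * K < e by rewrite -(ltr_pdivlMr _ _ K0).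
rewrite comb_dist1 comb_dist2; split; apply: le_lt_trans hK;
  apply: ler_wpM2l => //; rewrite /K;
  have := normr_ge0 (q.1 - p.1); have := normr_ge0 (q.2 - p.2); lra.
Qed.

Lemma exit_pt (S : set pt) a b : closed S -> S a -> ~ S b ->
  exists t, [/\ 0 <= t < 1, S (comb t a b) & ~ interior S (comb t a b)].
Proof.
move=> cS Sa Sb.
pose E := [set t : R | 0 <= t <= 1 /\ S (comb t a b)].
have E0 : E 0 by split; [rewrite lexx ler01|rewrite comb0].
have hE : has_sup E by split; [exists 0|exists 1 => t [/andP[_ ]]].
set s := sup E.
have s0 : 0 <= s by apply: sup_upper_bound.
have s1 : s <= 1 by apply: ge_sup; [exists 0|move=> t [/andP[_ ]]].
set K := `|b.1 - a.1| + `|b.2 - a.2| + 1.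
have K0 : 0 < K by rewrite /K; apply: ltr_wpDl => //; apply: addr_ge0.
have Ss : S (comb s a b).
  apply: cS => B /nbhs2P [e e0 HB].
  have [t Et ht] := sup_adherent (divr_gt0 e0 K0) hE.
  have tls : t <= s by apply: sup_upper_bound.
  exists (comb t a b); split; first by case: Et.
  have := @comb_close s t a b e e0.
  rewrite -/K; case.
    rewrite ger0_norm ?subr_ge0 //; move: ht; rewrite -/s; lra.
  by move=> h1 h2; apply: HB.
exists s; split => //.
  rewrite s0 /=; rewrite lt_neqAle s1 andbT; apply/eqP => es.
  by apply: Sb; rewrite -(comb_1 a b) -es.
move=> /nbhs2P [e e0 He].
have s1' : s < 1.
  rewrite lt_neqAle s1 andbT; apply/eqP => es.
  by apply: Sb; rewrite -(comb_1 a b) -es.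
pose d := Num.min (e / K) (1 - s) / 2.
have d0 : 0 < d by rewrite /d divr_gt0 // lt_min divr_gt0 //= subr_gt0.
have d1 : d < e / K.
  rewrite /d; apply: (@lt_le_trans _ _ (Num.min (e / K) (1 - s))).
    by rewrite ltr_pdivrMr // ltr_pMr ?ltr1n // lt_min divr_gt0 //= subr_gt0.
  by rewrite ge_min lexx.
have d2 : d <= 1 - s.
  rewrite /d; apply: (@le_trans _ _ (Num.min (e / K) (1 - s))).
    rewrite ler_pdivrMr // ler_peMr ?ler1n //; apply/ltW.
    by rewrite lt_min divr_gt0 //= subr_gt0.
  by rewrite ge_min lexx orbT.
have : E (s + d).
  split; first by apply/andP; split; lra.
  have := @comb_close s (s + d) a b e e0.
  rewrite -/K; case.
    rewrite (_ : s - (s + d) = - d); last by ring. by rewrite normrN ger0_norm ?ltW.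
  by move=> h1 h2; apply: He.
move=> /(sup_upper_bound hE) /=; rewrite -/s; lra.
Qed.


Lemma interior_comb (S : set pt) w u t : convex S -> interior S w -> S u ->
  0 <= t < 1 -> interior S (comb t w u).
Proof.
move=> cS /nbhs2P [e e0 He] Su /andP [t0 t1].
have t1' : 0 < 1 - t by rewrite subr_gt0.
have t1n : 1 - t != 0 by rewrite gt_eqF.
apply/nbhs2P; exists ((1 - t) * e); first exact: mulr_gt0.
move=> y h1 h2.
pose q : pt := ((y.1 - t * u.1) / (1 - t), (y.2 - t * u.2) / (1 - t)).
have Sq : S q.
  apply: He.
    rewrite (_ : w.1 - q.1 = ((comb t w u).1 - y.1) / (1 - t)); last first.
      by rewrite /q /comb /=; field.
    by rewrite normrM normfV (gtr0_norm t1') ltr_pdivrMr // mulrC.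
  rewrite (_ : w.2 - q.2 = ((comb t w u).2 - y.2) / (1 - t)); last first.
    by rewrite /q /comb /=; field.
  by rewrite normrM normfV (gtr0_norm t1') ltr_pdivrMr // mulrC.
have -> : y = comb t q u.
  by rewrite /q; case: y {h1 h2 q Sq} => y1 y2; rewrite /comb /=; congr pair; field.
by apply: cS => //; rewrite t0 ltW.
Qed.

Lemma conv3 (C : set pt) p0 p1 p2 (l1 l2 : R) (y : pt) : convex C ->
  C p0 -> C p1 -> C p2 -> 0 <= l1 -> 0 <= l2 -> l1 + l2 <= 1 -> 0 < l1 + l2 ->
  y.1 = p0.1 + l1 * (p1.1 - p0.1) + l2 * (p2.1 - p0.1) ->
  y.2 = p0.2 + l1 * (p1.2 - p0.2) + l2 * (p2.2 - p0.2) -> C y.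
Proof.
move=> cC C0 C1 C2 l10 l20 l12 s0 hy1 hy2.
have sn : l1 + l2 != 0 by rewrite gt_eqF.
have Cq : C (comb (l2 / (l1 + l2)) p1 p2).
  apply: cC => //; apply/andP; split; [by rewrite divr_ge0 // ltW | rewrite ler_pdivrMr // mul1r; lra].
have -> : y = comb (l1 + l2) p0 (comb (l2 / (l1 + l2)) p1 p2).
  case: y hy1 hy2 => y1 y2 /= -> ->; rewrite /comb /=; congr pair; field; exact: sn.
by apply: (cC p0 _ (l1 + l2)) => //; rewrite ltW // l12.
Qed.

Lemma bnd_lin (x1 x2 w1 w2 e K : R) : `|x1| < e -> `|x2| < e ->
  `|w1| + `|w2| <= K -> `|x1 * w2 - x2 * w1| <= e * K.
Proof.
move=> h1 h2 hK; apply: (le_trans (ler_normB _ _)); rewrite !normrM.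
have := normr_ge0 w1; have := normr_ge0 w2; have := normr_ge0 x1;
  have := normr_ge0 x2; nra.
Qed.

Lemma tri_interior (C : set pt) p0 p1 p2 : convex C -> C p0 -> C p1 -> C p2 ->
  (p1.1 - p0.1) * (p2.2 - p0.2) - (p1.2 - p0.2) * (p2.1 - p0.1) != 0 ->
  interior C ((p0.1 + p1.1 + p2.1) / 3, (p0.2 + p1.2 + p2.2) / 3).
Proof.
move=> cC C0 C1 C2; set D := _ - _ => D0.
set a1 := p1.1 - p0.1; set a2 := p1.2 - p0.2.
set b1 := p2.1 - p0.1; set b2 := p2.2 - p0.2.
set K : R := `|a1| + `|a2| + `|b1| + `|b2| + 1.
have K0 : 0 < K.
  rewrite /K; have := normr_ge0 a1; have := normr_ge0 a2;
  have := normr_ge0 b1; have := normr_ge0 b2; lra.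
have Dp : 0 < `|D| by rewrite normr_gt0.
set c := (_, _).
apply/nbhs2P; exists (`|D| / (6 * K)); first by rewrite divr_gt0 // mulr_gt0.
move=> y h1 h2.
set x1 := y.1 - c.1; set x2 := y.2 - c.2.
have hx1 : `|x1| < `|D| / (6 * K) by rewrite /x1 distrC.
have hx2 : `|x2| < `|D| / (6 * K) by rewrite /x2 distrC.
pose l1 := 1 / 3 + (x1 * b2 - x2 * b1) / D.
pose l2 := 1 / 3 + (a1 * x2 - a2 * x1) / D.
have eK : `|D| / (6 * K) * K = `|D| / 6 by field; rewrite gt_eqF.
have bd : forall (w1 w2 z1 z2 : R), `|z1| < `|D| / (6 * K) ->
   `|z2| < `|D| / (6 * K) -> `|w1| + `|w2| <= K ->
   - (1 / 6) <= (z1 * w2 - z2 * w1) / D <= 1 / 6.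
  move=> w1 w2 z1 z2 hz1 hz2 hw; rewrite -ler_norml normrM normfV.
  rewrite ler_pdivrMr //; apply: (le_trans (@bnd_lin z1 z2 w1 w2 _ K hz1 hz2 hw)).
  by rewrite eK mul1r mulrC.
have hb : `|b1| + `|b2| <= K.
  rewrite /K; have := normr_ge0 a1; have := normr_ge0 a2; lra.
have ha : `|a2| + `|a1| <= K.
  rewrite /K; have := normr_ge0 b1; have := normr_ge0 b2; lra.
have /andP [d1 d1'] := bd _ _ _ _ hx1 hx2 hb.
have /andP [d2 d2'] := bd _ _ _ _ hx2 hx1 ha.
apply: (@conv3 C p0 p1 p2 l1 l2) => //.
- rewrite /l1; lra.
- rewrite /l2; lra.
- rewrite /l1 /l2; lra.
- rewrite /l1 /l2; lra.
- rewrite /l1 /l2 /x1 /x2 /c /= -/a1 -/a2 -/b1 -/b2.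
  have -> : y.1 = p0.1 + a1 + b1 - a1 - b1 + (y.1 - p0.1) by ring.
  rewrite /a1 /b1 /a2 /b2 -/D; move: D0; rewrite /D => D0; field => //.
- rewrite /l1 /l2 /x1 /x2 /c /= -/a1 -/a2 -/b1 -/b2.
  rewrite /a1 /b1 /a2 /b2 -/D; move: D0; rewrite /D => D0; field => //.
Qed.


Lemma on_line_comb (l : line R) p q t : on_line l p -> on_line l q ->
  on_line l (comb t p q).
Proof.
rewrite /on_line /comb /= => hp hq.
have e : l.1.1 * ((1 - t) * p.1 + t * q.1) + l.1.2 * ((1 - t) * p.2 + t * q.2)
  - l.2 = (1 - t) * ((l.1.1 * p.1 + l.1.2 * p.2) - l.2) +
  t * ((l.1.1 * q.1 + l.1.2 * q.2) - l.2) by ring.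
move: e; rewrite hp hq subrr !mulr0 addr0 => /eqP; rewrite subr_eq0 => /eqP.
done.
Qed.

Lemma two_lines (l1 l2 : line R) (p q : pt) :
  l1.1.1 * l2.1.2 - l2.1.1 * l1.1.2 != 0 ->
  on_line l1 p -> on_line l1 q -> on_line l2 p -> on_line l2 q -> p = q.
Proof.
rewrite /on_line => d0 h1p h1q h2p h2q.
have e1 : (l1.1.1 * l2.1.2 - l2.1.1 * l1.1.2) * (p.1 - q.1) =
  l2.1.2 * ((l1.1.1 * p.1 + l1.1.2 * p.2) - (l1.1.1 * q.1 + l1.1.2 * q.2)) -
  l1.1.2 * ((l2.1.1 * p.1 + l2.1.2 * p.2) - (l2.1.1 * q.1 + l2.1.2 * q.2)).
  by ring.
have e2 : (l1.1.1 * l2.1.2 - l2.1.1 * l1.1.2) * (p.2 - q.2) =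
  l1.1.1 * ((l2.1.1 * p.1 + l2.1.2 * p.2) - (l2.1.1 * q.1 + l2.1.2 * q.2)) -
  l2.1.1 * ((l1.1.1 * p.1 + l1.1.2 * p.2) - (l1.1.1 * q.1 + l1.1.2 * q.2)).
  by ring.
rewrite h1p h1q h2p h2q !subrr !mulr0 subrr in e1 e2.
move/eqP: e1; rewrite mulf_eq0 (negbTE d0) /= subr_eq0 => /eqP e1.
move/eqP: e2; rewrite mulf_eq0 (negbTE d0) /= subr_eq0 => /eqP e2.
by move: e1 e2 {h1p h1q h2p h2q}; case: p => ? ?; case: q => ? ? /= -> ->.
Qed.

Lemma collinear_on (l : line R) (p0 p1 p2 : pt) : p1 <> p0 ->
  on_line l p0 -> on_line l p1 ->
  (p1.1 - p0.1) * (p2.2 - p0.2) - (p1.2 - p0.2) * (p2.1 - p0.1) = 0 ->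
  on_line l p2.
Proof.
rewrite /on_line => n01 h0 h1 hD.
set X := l.1.1 * (p2.1 - p0.1) + l.1.2 * (p2.2 - p0.2).
have ha : l.1.1 * (p1.1 - p0.1) + l.1.2 * (p1.2 - p0.2) = 0.
  rewrite (_ : _ + _ = (l.1.1 * p1.1 + l.1.2 * p1.2) - (l.1.1 * p0.1 + l.1.2 * p0.2)); last by ring.
  by rewrite h0 h1 subrr.
have x1 : X * (p1.1 - p0.1) = 0.
  rewrite (_ : X * _ = (p2.1 - p0.1) * (l.1.1 * (p1.1 - p0.1) + l.1.2 * (p1.2 - p0.2))
     + l.1.2 * ((p1.1 - p0.1) * (p2.2 - p0.2) - (p1.2 - p0.2) * (p2.1 - p0.1))); last by rewrite /X; ring.
  by rewrite ha hD !mulr0 addr0.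
have x2 : X * (p1.2 - p0.2) = 0.
  rewrite (_ : X * _ = (p2.2 - p0.2) * (l.1.1 * (p1.1 - p0.1) + l.1.2 * (p1.2 - p0.2))
     - l.1.1 * ((p1.1 - p0.1) * (p2.2 - p0.2) - (p1.2 - p0.2) * (p2.1 - p0.1))); last by rewrite /X; ring.
  by rewrite ha hD !mulr0 subr0.
have X0 : X = 0.
  move/eqP: x1; rewrite mulf_eq0 => /orP [/eqP //|/eqP a1].
  move/eqP: x2; rewrite mulf_eq0 => /orP [/eqP //|/eqP a2].
  exfalso; apply: n01; move/eqP: a1; rewrite subr_eq0 => /eqP.
  move/eqP: a2; rewrite subr_eq0 => /eqP.
  by move=> e2 e1; rewrite (surjective_pairing p1) (surjective_pairing p0) e1 e2.
rewrite (_ : _ + _ = X + (l.1.1 * p0.1 + l.1.2 * p0.2)); last by rewrite /X; ring.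
by rewrite X0 h0 add0r.
Qed.

Lemma far_pt (M : R) (r d : pt) : 0 <= M -> (d.1 != 0 \/ d.2 != 0) ->
  exists T, 0 < T /\ ~ (`|r.1 + T * d.1| <= M /\ `|r.2 + T * d.2| <= M).
Proof.
move=> M0 hd.
have S0 : 0 < `|d.1| + `|d.2|.
  have := normr_ge0 d.1; have := normr_ge0 d.2.
  case: hd => h.
    have : 0 < `|d.1| by rewrite normr_gt0.
    lra.
  have : 0 < `|d.2| by rewrite normr_gt0.
  lra.
set Sd := `|d.1| + `|d.2| in S0.
pose T := (2 * M + `|r.1| + `|r.2| + 1) / Sd.
have T0 : 0 < T.
  rewrite /T divr_gt0 //; have := normr_ge0 r.1; have := normr_ge0 r.2; lra.
exists T; split => // -[h1 h2].
have hT : T * Sd = 2 * M + `|r.1| + `|r.2| + 1 by rewrite /T; field; rewrite gt_eqF.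
have t1 : T * `|d.1| <= `|r.1 + T * d.1| + `|r.1|.
  have e : r.1 + T * d.1 - r.1 = T * d.1 by ring.
  by have := ler_normB (r.1 + T * d.1) r.1; rewrite e normrM (ger0_norm (ltW T0)).
have t2 : T * `|d.2| <= `|r.2 + T * d.2| + `|r.2|.
  have e : r.2 + T * d.2 - r.2 = T * d.2 by ring.
  by have := ler_normB (r.2 + T * d.2) r.2; rewrite e normrM (ger0_norm (ltW T0)).
move: hT; rewrite /Sd mulrDr; lra.
Qed.

Lemma mid_seg (p q r d : pt) u u' : 0 < u -> 0 < u' ->
  segment p q (r.1 + u * d.1, r.2 + u * d.2) ->
  segment p q (r.1 - u' * d.1, r.2 - u' * d.2) -> segment p q r.
Proof.
move=> u0 u0' [s1 /andP [s10 s11] e1] [s2 /andP [s20 s21] e2].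
pose lam := u / (u + u').
have uu : u + u' != 0 by rewrite gt_eqF // addr_gt0.
have l0 : 0 <= lam by rewrite /lam divr_ge0 // ltW // addr_gt0.
have l1 : lam <= 1 by rewrite /lam ler_pdivrMr ?addr_gt0 // mul1r; lra.
exists ((1 - lam) * s1 + lam * s2).
  apply/andP; split; nra.
move: e1 e2; rewrite /comb; case: r => r1 r2 /= [e11 e12] [e21 e22].
have E1 : r1 = (1 - lam) * (r1 + u * d.1) + lam * (r1 - u' * d.1).
  by rewrite /lam; field.
have E2 : r2 = (1 - lam) * (r2 + u * d.2) + lam * (r2 - u' * d.2).
  by rewrite /lam; field.
congr pair.
  by rewrite E1 e11 e21; ring.
by rewrite E2 e12 e22; ring.
Qed.

End Gen.
Arguments exit_pt {R S a b}.
Arguments tri_interior {R C p0 p1 p2}.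
Arguments on_line_comb {R l p q}.
Arguments two_lines {R l1 l2 p q}.
Arguments collinear_on {R l p0 p1 p2}.
Arguments far_pt {R M} r {d}.
Arguments mid_seg {R p q r d u u'}.

Section Main.
Variable R : realType.
Local Notation pt := (R * R)%type.
Variables (N : nat) (L : 'I_N -> line R) (m : nat) (v : 'I_m -> pt)
  (ln : 'I_m -> 'I_N) (V : set pt).
Hypothesis HL : bounded_general_position L.
Hypothesis Hm : (2 < m)%N.
Hypothesis Hinj : injective ln.
Hypothesis Hedge : forall k : 'I_m, is_edge L (ln k) (v k) (v (ordS k)).
Hypothesis HV : V = convex_hull [set v k | k in [set: 'I_m]].
Hypothesis Hbd : boundary V = [set x | exists k : 'I_m, segment (v k) (v (ordS k)) x].

Lemma convV : convex V.
Proof.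
rewrite HV => p q t hp hq ht C cC sC.
by apply: (cC p q t) => //; [apply: hp | apply: hq].
Qed.

Lemma vV k : V (v k).
Proof. by rewrite HV => C cC sC; apply: sC; exists k. Qed.

Lemma segV k : segment (v k) (v (ordS k)) `<=` V.
Proof. by move=> x [t ht ->]; apply: convV => //; apply: vV. Qed.

Lemma bdV : boundary V `<=` V.
Proof. by rewrite Hbd => x [k /segV]. Qed.

Lemma closedV : closed V.
Proof.
move=> x cx; have [ix|nix] := pselect (interior V x).
  exact: interior_subset.
by apply: bdV; split.
Qed.

Lemma bndV : exists M : R, 0 <= M /\ forall p, V p -> `|p.1| <= M /\ `|p.2| <= M.
Proof.
pose M : R := \sum_(k < m) (`|(v k).1| + `|(v k).2|).
have M0 : 0 <= M by apply: sumr_ge0 => k _; apply: addr_ge0.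
exists M; split => //; rewrite HV => p hp; apply: (hp (fun p : pt => `|p.1| <= M /\ `|p.2| <= M)).
  move=> a b t [a1 a2] [b1 b2] /andP [t0 t1]; rewrite !comb1E !comb2E.
  have t1' : 0 <= 1 - t by rewrite subr_ge0.
  split.
    rewrite (_ : a.1 + t * (b.1 - a.1) = (1 - t) * a.1 + t * b.1); last by ring.
    apply: (le_trans (ler_normD _ _)); rewrite !normrM (ger0_norm t0) (ger0_norm t1').
    nra.
  rewrite (_ : a.2 + t * (b.2 - a.2) = (1 - t) * a.2 + t * b.2); last by ring.
  apply: (le_trans (ler_normD _ _)); rewrite !normrM (ger0_norm t0) (ger0_norm t1').
  nra.
move=> q [k _ <-].
have hk : `|(v k).1| + `|(v k).2| <= M.
  by rewrite /M (bigD1 k) //= lerDl; apply: sumr_ge0 => j _; apply: addr_ge0.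
have := normr_ge0 (v k).1; have := normr_ge0 (v k).2; split; lra.
Qed.

Lemma compactV : compact V.
Proof.
have [M [M0 hM]] := bndV.
apply: (@subclosed_compact _ _ (`[-M, M] `*` `[-M, M])).
- exact: closedV.
- by apply: compact_setX; apply: segment_compact.
- move=> p /hM [h1 h2]; split => /=; rewrite in_itv /= -ler_norml //.
Qed.

Lemma comb_cont (a b : pt) : continuous (fun t : R => comb t a b).
Proof.
move=> t; rewrite /comb.
have h1 : continuous (fun t : R => (1 - t) * a.1 + t * b.1).
  move=> x; apply: cvgD; [apply: cvgM; [apply: cvgB; [exact: cvg_cst|exact: cvg_id]|exact: cvg_cst]|apply: cvgM; [exact: cvg_id|exact: cvg_cst]].
have h2 : continuous (fun t : R => (1 - t) * a.2 + t * b.2).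
  move=> x; apply: cvgD; [apply: cvgM; [apply: cvgB; [exact: cvg_cst|exact: cvg_id]|exact: cvg_cst]|apply: cvgM; [exact: cvg_id|exact: cvg_cst]].
exact: (cvg_pair (h1 t) (h2 t)).
Qed.

Let k0 : 'I_m := Ordinal (ltn_trans (isT : (0 < 2)%N) Hm).

Lemma connectedV : connected V.
Proof.
pose A := fun x : pt => (fun t : R => comb t (v k0) x) @` `[0, 1].
have -> : V = \bigcup_(x in V) A x.
  apply/seteqP; split => [x Vx|x [y Vy [t ht <-]]].
    exists x => //; exists 1; last exact: comb_1.
    by rewrite /= in_itv /= lexx ler01.
  by apply: (convV _ _ t (vV k0) Vy); move: ht; rewrite /= in_itv.
apply: bigcup_connected.
  exists (v k0) => x Vx; exists 0; last exact: comb0.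
  by rewrite /= in_itv /= lexx ler01.
move=> x Vx; apply: connected_continuous_connected.
  exact: segment_connected.
exact: continuous_subspaceT (comb_cont _ _).
Qed.

Lemma ordS_neq (k : 'I_m) : ordS k != k.
Proof.
apply/eqP => /(congr1 val) /=; case: k => k /= km.
have [h|h] := ltnP k.+1 m.
  by rewrite modn_small // => /eqP; rewrite -[X in _ == X]addn0 -addn1 eqn_add2l.
have e : k.+1 = m by apply/eqP; rewrite eqn_leq h km.
rewrite e modnn => k0e; move: Hm; rewrite -e -k0e.
by [].
Qed.


Lemma seg_l (p q : pt) : segment p q p.
Proof. by exists 0; [rewrite lexx ler01 | rewrite comb0]. Qed.
Lemma seg_r (p q : pt) : segment p q q.
Proof. by exists 1; [rewrite lexx ler01 | rewrite comb_1]. Qed.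

Lemma lnS_neq (k : 'I_m) : ln (ordS k) != ln k.
Proof. by apply/eqP => /Hinj /eqP; rewrite (negbTE (ordS_neq k)). Qed.

Lemma interiorV : interior V !=set0.
Proof.
set k1 := ordS k0; set k2 := ordS k1.
have [n01 [_ [_ [h0 [h1 _]]]]] := Hedge k0.
have [n12 [_ [_ [g1 [g2 _]]]]] := Hedge k1.
rewrite -/k1 in n01 h0 h1; rewrite -/k2 in n12 g1 g2.
have [_ [Hdet _]] := HL.
have dd : (L (ln k0)).1.1 * (L (ln k1)).1.2 - (L (ln k1)).1.1 * (L (ln k0)).1.2 != 0.
  by apply: Hdet; rewrite eq_sym; apply: lnS_neq.
eexists; apply: (tri_interior convV (vV k0) (vV k1) (vV k2)).
apply/eqP => D0.
have o2 : on_line (L (ln k0)) (v k2).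
  by apply: (collinear_on (p0 := v k0) (p1 := v k1)) => // e; apply: n01.
by apply: n12; apply: (two_lines dd).
Qed.

Lemma vert_case (j : 'I_m) i : on_line (L i) (v j) ->
  exists k, ln k = i /\ segment (v k) (v (ordS k)) (v j).
Proof.
move=> hi.
set jp := ord_pred j.
have ej : ordS jp = j by rewrite /jp ord_predK.
have [_ [_ [_ [h1 _]]]] := Hedge j.
have [_ [_ [_ [_ [h2 _]]]]] := Hedge jp.
rewrite ej in h2.
have [->|nij] := eqVneq i (ln j).
  by exists j; split => //; apply: seg_l.
have [->|nijp] := eqVneq i (ln jp).
  by exists jp; split => //; rewrite -{1}ej; apply: seg_r.
exfalso; have [_ [_ Hgp]] := HL.
apply: (Hgp i (ln j) (ln jp) (v j) nij _ nijp); last by split.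
by rewrite -ej lnS_neq.
Qed.

Lemma bd_line y i : boundary V y -> on_line (L i) y ->
  exists k, ln k = i /\ segment (v k) (v (ordS k)) y.
Proof.
rewrite Hbd => -[k [t /andP [t0 t1] ey]] hy.
have [et0|nt0] := eqVneq t 0.
  by move: hy; rewrite ey et0 comb0; apply: vert_case.
have [et1|nt1] := eqVneq t 1.
  by move: hy; rewrite ey et1 comb_1; apply: vert_case.
have [ei|nei] := eqVneq i (ln k).
  by exists k; split => //; exists t => //; rewrite t0 t1.
exfalso.
have [_ [_ [_ [gk [gk' hno]]]]] := Hedge k.
apply: (hno y).
  exists i, (ln k); split => //; split => //.
  by rewrite ey; apply: on_line_comb.
by exists t => //; rewrite lt_neqAle eq_sym nt0 t0 /= lt_neqAle nt1 t1.
Qed.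

Lemma exit_dir r i (d : pt) : interior V r -> on_line (L i) r ->
  (d.1 != 0 \/ d.2 != 0) -> (L i).1.1 * d.1 + (L i).1.2 * d.2 = 0 ->
  exists u k, [/\ 0 < u, ln k = i &
     segment (v k) (v (ordS k)) (r.1 + u * d.1, r.2 + u * d.2)].
Proof.
move=> ir hr dn hd.
have [M [M0 hM]] := bndV.
have [T [T0 hT]] := far_pt r M0 dn.
pose b : pt := (r.1 + T * d.1, r.2 + T * d.2).
have nVb : ~ V b by move/hM.
have ob : on_line (L i) b.
  move: hr; rewrite /on_line /b /= => hr.
  rewrite -hr (_ : _ + _ = (L i).1.1 * r.1 + (L i).1.2 * r.2 +
    T * ((L i).1.1 * d.1 + (L i).1.2 * d.2)); last by ring.
  by rewrite hd mulr0 addr0.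
have [t [/andP [t0 t1] Vy niy]] := exit_pt closedV (interior_subset ir) nVb.
have tp : 0 < t.
  rewrite lt_neqAle t0 andbT; apply/eqP => et.
  by apply: niy; rewrite -et comb0.
have by' : boundary V (comb t r b) by split => //; apply: subset_closure.
have [k [ek sk]] := bd_line _ _ by' (on_line_comb t hr ob).
exists (t * T), k; split => //; first exact: mulr_gt0.
move: sk; rewrite /b /comb; case: r {ir hr ob niy Vy by' b nVb hT} => r1 r2 /=.
by congr (segment _ _ (_, _)); ring.
Qed.

Lemma no_line_interior r i : interior V r -> on_line (L i) r -> False.
Proof.
move=> ir hr.
have [Hnz _] := HL.
pose d : pt := ((L i).1.2, - (L i).1.1).
have dn : d.1 != 0 \/ d.2 != 0.
  by case: (Hnz i) => h; [right; rewrite /d /= oppr_eq0 | left].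
have hd : (L i).1.1 * d.1 + (L i).1.2 * d.2 = 0 by rewrite /d /=; ring.
have dn' : (- d.1) != 0 \/ (- d.2) != 0 by case: dn => h; [left|right]; rewrite oppr_eq0.
have hd' : (L i).1.1 * (- d.1) + (L i).1.2 * (- d.2) = 0.
  by rewrite /d /=; ring.
have [u [k [u0 ek sk]]] := exit_dir _ _ _ ir hr dn hd.
have [u' [k' [u0' ek' sk']]] := exit_dir _ _ (- d.1, - d.2) ir hr dn' hd'.
have sk2 : segment (v k') (v (ordS k')) (r.1 - u' * d.1, r.2 - u' * d.2).
  by move: sk'; rewrite !mulrN.
have kk : k' = k by apply: Hinj; rewrite ek ek'.
rewrite kk in sk2.
have sr := mid_seg u0 u0' sk sk2.
have : boundary V r by rewrite Hbd; exists k.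
by case.
Qed.

Lemma minimalV W : W `<=` V -> W <> V -> alcove_cond L W -> False.
Proof.
move=> WV nWV [cW _ _ [w iw] [s [_ hs hbW]]].
have hH : hausdorff_space pt by exact: norm_hausdorff.
have clW : closed W := compact_closed hH cW.
have [u [Vu nWu]] : exists u, V u /\ ~ W u.
  apply: contrapT => hn; apply: nWV; apply/seteqP; split => // x Vx.
  by apply: contrapT => nWx; apply: hn; exists x.
have [t [t01 Wy niy]] := exit_pt clW (interior_subset iw) nWu.
have : boundary W (comb t w u) by split => //; apply: subset_closure.
rewrite hbW => -[e es [t' _ ey]].
have [_ [_ [_ [q1 [q2 _]]]]] := hs e es.
have oy : on_line (L e.1.1) (comb t w u) by rewrite ey; apply: on_line_comb.
apply: (no_line_interior _ _ _ oy).
apply: interior_comb => //; first exact: convV.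
exact: (interiorS WV).
Qed.

Lemma alcoveV : alcove L V.
Proof.
split; last by move=> [W [WV [nWV aW]]]; apply: (minimalV _ WV nWV aW).
split.
- exact: compactV.
- exact: convV.
- exact: connectedV.
- exact: interiorV.
exists [seq (ln k, v k, v (ordS k)) | k <- enum 'I_m]; split.
- rewrite -map_comp map_inj_uniq ?enum_uniq // => a b /= h; exact: Hinj h.
- by move=> e /mapP [k _ ->]; exact: Hedge k.
- rewrite Hbd; apply/seteqP; split => x.
    move=> [k hk]; exists (ln k, v k, v (ordS k)) => //.
    by apply/mapP; exists k; rewrite ?mem_enum.
  by move=> [e /mapP [k _ ->] hx]; exists k.
Qed.

End Main.

Theorem lemma1p5 (R : realType) (N : nat) (L : 'I_N -> line R)
    (m : nat) (v : 'I_m -> pt R) (ln : 'I_m -> 'I_N) (V : set (pt R)) :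
  bounded_general_position L ->
  (2 < m)%N ->
  injective ln ->
  (forall k : 'I_m, is_edge L (ln k) (v k) (v (ordS k))) ->
  V = convex_hull [set v k | k in [set: 'I_m]] ->
  boundary V = [set x | exists k : 'I_m, segment (v k) (v (ordS k)) x] ->
  alcove L V.
Proof.
move=> HL Hm Hinj Hedge HV Hbd.
apply: (@alcoveV R N L m v ln V) => //.
Qed.
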